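(* Let $G$ be a finite group and $\varphi\colon T\to S$ a morphism of $G$-Tambara functors. The induced map $\varphi^a\colon\operatorname{Spec}_{\mathbf{Nak}}(S)\to\operatorname{Spec}_{\mathbf{Nak}}(T)$ sends each prime $Q$ of $S$ to its levelwise preimage $\varphi^{-1}(Q)$, where $\varphi^{-1}(Q)(G/H)=\varphi_H^{-1}(Q(G/H))$.
   Context: All rings are commutative with unit. A $G$-Tambara functor consists of commutative rings $T(G/H)$ for subgroups $H\le G$ with restriction ring maps, additive transfer maps, multiplicative norm maps and conjugation isomorphisms satisfying the standard Tambara axioms (Hill–Mazur); a morphism $\varphi\colon T\to S$ is a family of ring maps $\varphi_H$ commuting with all structure maps. A Tambara ideal is a family of ring ideals closed under restriction, transfer, norm and conjugation; proper if $1\notin I(G/G)$. Products of Tambara ideals are generated by levelwise products; the radical $\sqrt I$ has $\sqrt I(G/H)=\{x\mid\langle x\rangle^n\subseteq I\text{ for some }n\ge1\}$, $\langle x\rangle$ the Tambara ideal generated by $x$. A proper ideal $P$ is prime if $IJ\subseteq P$ implies $I\subseteq P$ or $J\subseteq P$. $\operatorname{Spec}_{\mathbf{Nak}}(T)$ is the set of primes with subbasic closed sets $V_H(x)=\{P\mid x\in P(G/H)\}$. $\mathrm{RadId}_G(T)$ is the frame of radical Tambara ideals (inclusion order; joins $\sqrt{\sum I_\lambda}$); each prime $P$ corresponds to the frame point $p_P\colon\mathrm{RadId}_G(T)\to\{0,1\}$ with $p_P(I)=0$ iff $I\subseteq P$, and conversely a point $p$ corresponds to the prime $\bigvee\{I\mid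 p(I)=0\}$. For a Tambara ideal $I$ of $T$, $\varphi_*(I)$ is the Tambara ideal of $S$ generated by the sets $\varphi_H(I(G/H))$, and $\widetilde\varphi(I)=\sqrt{\varphi_*(I)}$ defines a frame homomorphism $\mathrm{RadId}_G(T)\to\mathrm{RadId}_G(S)$. The map $\varphi^a$ sends $Q$ to the prime of $T$ corresponding to the point $p_Q\circ\widetilde\varphi$. *)

(* Defs.v *)
(* G-Tambara functors for a finite
   group G, presented algebraically (Hill--Mazur style): G is the whole
   finGroupType gT, and the level G/H is indexed by the subgroup H : {group gT}. *)
From HB Require Import structures.
From mathcomp Require Import all_boot all_order all_algebra all_fingroup.
Set Implicit Arguments.
Unset Strict Implicit.
Unset Printing Implicit Defensive.
Import GRing.Theory.
Local Open Scope ring_scope.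

Section Tambara.
Variable gT : finGroupType.
Implicit Types H K L : {group gT}.

Definition dcoset_reps (L H K : {group gT}) (R : {set gT}) : Prop :=
  R \subset H /\
  forall h, h \in H -> #|R :&: ((L :* h) * K)%g| = 1%N.

(* Phi is a set of representatives of the orbits, under left translation by
   H, of the subsets of gT satisfying P (P is assumed H-stable). *)
Definition orbit_reps (P : {set gT} -> bool) (H : {group gT})
  (Phi : {set {set gT}}) : Prop :=
  (forall S, S \in Phi -> P S) /\
  forall S, P S -> #|[set S' in Phi | [exists h in H, S' == (h *: S)%g]]| = 1%N.

Definition lstab (H : {group gT}) (S : {set gT}) : {group gT} :=
  <<[set h in H | (h *: S)%g == S]>>%G.

(* Subsets S of H that are unions of left K-cosets: functions H/K -> {0,1}. *)
Definition fun_to_2 (H K : {group gT}) (S : {set gT}) : bool :=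
  (S \subset H) && ((S * K)%g == S).

(* Subsets S of H encoding sections H/K -> H/L of the projection H/L -> H/K:
   S is a union of left L-cosets meeting every left K-coset xK (x in H) in
   exactly one left L-coset. *)
Definition section_set (H K L : {group gT}) (S : {set gT}) : bool :=
  [&& S \subset H, (S * L)%g == S &
      [forall x in H, #|S :&: (x *: K)%g| == #|L| ]].

Local Unset Implicit Arguments.
Record tambara := Tambara {
  tcar : {group gT} -> comPzRingType;
  tres : forall H K, tcar H -> tcar K;         (* restriction  T(G/H) -> T(G/K), K <= H *)
  ttr  : forall K H, tcar K -> tcar H;         (* transfer     T(G/K) -> T(G/H), K <= H *)
  tnm  : forall K H, tcar K -> tcar H;         (* norm         T(G/K) -> T(G/H), K <= H *)
  tconj : gT -> forall H K, tcar H -> tcar K;  (* c_g : T(G/H) -> T(G/H^g), K = H^g *)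
  res_id : forall H x, tres H H x = x;
  res_comp : forall H K L x, L \subset K -> K \subset H ->
    tres K L (tres H K x) = tres H L x;
  res_add : forall H K x y, K \subset H -> tres H K (x + y) = tres H K x + tres H K y;
  res_mul : forall H K x y, K \subset H -> tres H K (x * y) = tres H K x * tres H K y;
  res_one : forall H K, K \subset H -> tres H K 1 = 1;
  tr_id : forall H x, ttr H H x = x;
  tr_comp : forall H K L x, L \subset K -> K \subset H ->
    ttr K H (ttr L K x) = ttr L H x;
  tr_add : forall K H x y, K \subset H -> ttr K H (x + y) = ttr K H x + ttr K H y;
  tr_zero : forall K H, K \subset H -> ttr K H 0 = 0;
  nm_id : forall H x, tnm H H x = x;
  nm_comp : forall H K L x, L \subset K -> K \subset H ->
    tnm K H (tnm L K x) = tnm L H x;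
  nm_mul : forall K H x y, K \subset H -> tnm K H (x * y) = tnm K H x * tnm K H y;
  nm_one : forall K H, K \subset H -> tnm K H 1 = 1;
  nm_zero : forall K H, K \subset H -> tnm K H 0 = 0;
  conj_comp : forall (g h : gT) H K L x, K = (H :^ g)%G -> L = (K :^ h)%G ->
    tconj h K L (tconj g H K x) = tconj (g * h)%g H L x;
  conj_in : forall (g : gT) H x, g \in H -> tconj g H H x = x;
  conj_add : forall g H K x y, K = (H :^ g)%G ->
    tconj g H K (x + y) = tconj g H K x + tconj g H K y;
  conj_mul : forall g H K x y, K = (H :^ g)%G ->
    tconj g H K (x * y) = tconj g H K x * tconj g H K y;
  conj_one : forall g H K, K = (H :^ g)%G -> tconj g H K 1 = 1;
  conj_res : forall g H K x, K \subset H ->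
    tconj g K (K :^ g)%G (tres H K x) = tres (H :^ g)%G (K :^ g)%G (tconj g H (H :^ g)%G x);
  conj_tr : forall g H K x, K \subset H ->
    tconj g H (H :^ g)%G (ttr K H x) = ttr (K :^ g)%G (H :^ g)%G (tconj g K (K :^ g)%G x);
  conj_nm : forall g H K x, K \subset H ->
    tconj g H (H :^ g)%G (tnm K H x) = tnm (K :^ g)%G (H :^ g)%G (tconj g K (K :^ g)%G x);
  frobenius : forall K H a b, K \subset H -> ttr K H (a * tres H K b) = ttr K H a * b;
  mackey_tr : forall H K L R a, K \subset H -> L \subset H -> dcoset_reps L H K R ->
    tres H L (ttr K H a) =
    \sum_(h in R) ttr (L :&: K :^ h^-1)%G L
        (tres (K :^ h^-1)%G (L :&: K :^ h^-1)%G (tconj h^-1%g K (K :^ h^-1)%G a));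
  mackey_nm : forall H K L R a, K \subset H -> L \subset H -> dcoset_reps L H K R ->
    tres H L (tnm K H a) =
    \prod_(h in R) tnm (L :&: K :^ h^-1)%G L
        (tres (K :^ h^-1)%G (L :&: K :^ h^-1)%G (tconj h^-1%g K (K :^ h^-1)%G a));
  nm_add : forall H K (Phi : {set {set gT}}) (R : {set gT} -> {set gT}) a b,
    K \subset H -> orbit_reps (fun_to_2 H K) H Phi ->
    (forall S, S \in Phi -> dcoset_reps (lstab H S) H K (R S)) ->
    tnm K H (a + b) =
    \sum_(S in Phi) ttr (lstab H S) H
      (\prod_(h in R S) tnm (lstab H S :&: K :^ h^-1)%G (lstab H S)
         (tres (K :^ h^-1)%G (lstab H S :&: K :^ h^-1)%G
            (tconj h^-1%g K (K :^ h^-1)%G (if h \in S then b else a))));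
  nm_tr : forall H K L (Psi : {set {set gT}}) (R : {set gT} -> {set gT})
      (sel : {set gT} -> gT -> gT) a,
    L \subset K -> K \subset H -> orbit_reps (section_set H K L) H Psi ->
    (forall S, S \in Psi -> dcoset_reps (lstab H S) H K (R S)) ->
    (forall S h, S \in Psi -> h \in R S -> sel S h \in S :&: (h *: K)%g) ->
    tnm K H (ttr L K a) =
    \sum_(S in Psi) ttr (lstab H S) H
      (\prod_(h in R S) tnm (lstab H S :&: K :^ h^-1)%G (lstab H S)
         (tres (L :^ (sel S h)^-1)%G (lstab H S :&: K :^ h^-1)%G
            (tconj (sel S h)^-1%g L (L :^ (sel S h)^-1)%G a)))
}.

Local Set Implicit Arguments.

Record tmorph (T S : tambara) := TMorph {
  tmap : forall H, {rmorphism tcar T H -> tcar S H};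
  tmap_res : forall H K x, K \subset H ->
    tmap K (tres T H K x) = tres S H K (tmap H x);
  tmap_tr : forall K H x, K \subset H ->
    tmap H (ttr T K H x) = ttr S K H (tmap K x);
  tmap_nm : forall K H x, K \subset H ->
    tmap H (tnm T K H x) = tnm S K H (tmap K x);
  tmap_conj : forall g H K x, K = (H :^ g)%G ->
    tmap K (tconj T g H K x) = tconj S g H K (tmap H x)
}.

Definition tfam (T : tambara) := forall H, tcar T H -> Prop.

Definition subI (T : tambara) (I J : tfam T) : Prop := forall H x, I H x -> J H x.

Definition ring_ideal (R : comPzRingType) (P : R -> Prop) : Prop :=
  [/\ P 0, (forall x y, P x -> P y -> P (x + y)) & (forall r x, P x -> P (r * x))].

Definition is_tideal (T : tambara) (I : tfam T) : Prop :=
  [/\ forall H, ring_ideal (I H),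
      forall H K x, K \subset H -> I H x -> I K (tres T H K x),
      forall K H x, K \subset H -> I K x -> I H (ttr T K H x),
      forall K H x, K \subset H -> I K x -> I H (tnm T K H x) &
      forall g H K x, K = (H :^ g)%G -> I H x -> I K (tconj T g H K x)].

Definition tgen (T : tambara) (X : tfam T) : tfam T :=
  fun H x => forall J : tfam T, is_tideal J -> subI X J -> J H x.

Definition tprincipal (T : tambara) (H : {group gT}) (x : tcar T H) : tfam T :=
  tgen (fun K y => forall J : tfam T, J H x -> J K y).

Definition tprod (T : tambara) (I J : tfam T) : tfam T :=
  tgen (fun H z => exists x y, [/\ I H x, J H y & z = x * y]).

Fixpoint tpow (T : tambara) (I : tfam T) (n : nat) : tfam T :=
  match n with
  | 0 => fun _ _ => True
  | n'.+1 => tprod (tpow I n') I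
  end.

Definition trad (T : tambara) (I : tfam T) : tfam T :=
  fun H x => exists n, (1 <= n)%N /\ subI (tpow (tprincipal x) n) I.

Definition is_rad_tideal (T : tambara) (I : tfam T) : Prop :=
  is_tideal I /\ subI (trad I) I.

Definition is_prime_tideal (T : tambara) (P : tfam T) : Prop :=
  [/\ is_tideal P, ~ P [set: gT]%G 1 &
      forall I J : tfam T, is_tideal I -> is_tideal J ->
        subI (tprod I J) P -> subI I P \/ subI J P].

(* Join in the frame RadId_G(T): sqrt of the sum of the family. *)
Definition rjoin (T : tambara) (F : tfam T -> Prop) : tfam T :=
  trad (tgen (fun H x => exists I, F I /\ I H x)).

(* Point p_P of RadId_G(T) attached to P: p_P(I) = 0 iff I <= P. *)
Definition point_zero (T : tambara) (P : tfam T) (I : tfam T) : Prop := subI I P.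

(* The prime attached to a point p (given by its zero set p0):
   \/ { I in RadId_G(T) | p(I) = 0 }. *)
Definition prime_of_point (T : tambara) (p0 : tfam T -> Prop) : tfam T :=
  rjoin (fun I => is_rad_tideal I /\ p0 I).

(* phi_*(I) and the frame map phi~(I) = sqrt(phi_*(I)). *)
Definition tpush (T S : tambara) (phi : tmorph T S) (I : tfam T) : tfam S :=
  tgen (fun H y => exists x, I H x /\ y = tmap phi H x).

Definition ttilde (T S : tambara) (phi : tmorph T S) (I : tfam T) : tfam S :=
  trad (tpush phi I).

(* phi^a(Q): the prime of T attached to the point p_Q o phi~. *)
Definition phi_a (T S : tambara) (phi : tmorph T S) (Q : tfam S) : tfam T :=
  prime_of_point (fun I => point_zero Q (ttilde phi I)).

Definition tpreim (T S : tambara) (phi : tmorph T S) (Q : tfam S) : tfam T :=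
  fun H x => Q H (tmap phi H x).

End Tambara.

(* Main.v *)
Require Import Defs.
From mathcomp Require Import all_boot all_order all_algebra all_fingroup.
From Stdlib Require Import FunctionalExtensionality PropExtensionality.
Set Warnings "-notation-overridden,-deprecated,-ambiguous-paths".
Set Implicit Arguments.
Unset Strict Implicit.
Unset Printing Implicit Defensive.
Import GRing.Theory.
Local Open Scope ring_scope.

Section Basic.
Variable gT : finGroupType.
Implicit Types H K L : {group gT}.

Section OneT.
Variable T : tambara gT.
Local Notation res := (tres gT T).
Local Notation tr := (ttr gT T).
Local Notation nm := (tnm gT T).
Local Notation cj := (tconj gT T).

Lemma add0_lem (R1 R2 : zmodType) (f : R1 -> R2) : (forall x y, f (x + y) = f x + f y) -> f 0 = 0.
Proof. by move=> fD; apply/eqP; rewrite -(inj_eq (addrI (f 0))) addr0 -fD addr0. Qed.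

Lemma res0 H K : K \subset H -> res H K 0 = 0.
Proof. by move=> sKH; apply: (add0_lem (f := res H K)) => x y; apply: res_add. Qed.

Lemma conj0 g H K : K = (H :^ g)%G -> cj g H K 0 = 0.
Proof. by move=> eK; apply: (add0_lem (f := cj g H K)) => x y; apply: conj_add. Qed.

Lemma tideal0 (I : tfam T) H : is_tideal I -> I H 0.
Proof. by case=> /(_ H) []. Qed.
Lemma tidealD (I : tfam T) H x y : is_tideal I -> I H x -> I H y -> I H (x + y).
Proof. by case=> /(_ H) [] _ hD _ *; apply: hD. Qed.
Lemma tidealM (I : tfam T) H r x : is_tideal I -> I H x -> I H (r * x).
Proof. by case=> /(_ H) [] _ _ hM *; apply: hM. Qed.
Lemma tidealMr (I : tfam T) H r x : is_tideal I -> I H x -> I H (x * r).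
Proof. by move=> *; rewrite mulrC; apply: tidealM. Qed.
Lemma tideal_res (I : tfam T) H K x : is_tideal I -> K \subset H -> I H x -> I K (res H K x).
Proof. by case=> _ h *; apply: h. Qed.
Lemma tideal_tr (I : tfam T) K H x : is_tideal I -> K \subset H -> I K x -> I H (tr K H x).
Proof. by case=> _ _ h *; apply: h. Qed.
Lemma tideal_nm (I : tfam T) K H x : is_tideal I -> K \subset H -> I K x -> I H (nm K H x).
Proof. by case=> _ _ _ h *; apply: h. Qed.
Lemma tideal_conj (I : tfam T) g H K x : is_tideal I -> K = (H :^ g)%G -> I H x -> I K (cj g H K x).
Proof. by case=> _ _ _ _ h *; apply: h. Qed.
Lemma tideal_sum (I : tfam T) H (J : {set gT}) (F : gT -> tcar gT T H) :
  is_tideal I -> (forall j, j \in J -> I H (F j)) -> I H (\sum_(j in J) F j).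
Proof.
move=> hI hF; elim/big_rec: _ => [|j s jJ hs]; first exact: tideal0.
by apply: tidealD => //; apply: hF.
Qed.
Lemma tideal_sumS (I : tfam T) H (J : {set {set gT}}) (F : {set gT} -> tcar gT T H) :
  is_tideal I -> (forall j, j \in J -> I H (F j)) -> I H (\sum_(j in J) F j).
Proof.
move=> hI hF; elim/big_rec: _ => [|j s jJ hs]; first exact: tideal0.
by apply: tidealD => //; apply: hF.
Qed.
Lemma tideal_prod (I : tfam T) H (J : {set gT}) (F : gT -> tcar gT T H) j0 :
  is_tideal I -> j0 \in J -> I H (F j0) -> I H (\prod_(j in J) F j).
Proof. by move=> hI jJ hF; rewrite (bigD1 j0) //=; apply: tidealMr. Qed.

Lemma tgen_ideal (X : tfam T) : is_tideal (tgen X).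
Proof.
split.
- move=> H; split.
  + by move=> J hJ _; apply: tideal0.
  + by move=> x y hx hy J hJ hX; apply: tidealD => //; [apply: hx|apply: hy].
  + by move=> r x hx J hJ hX; apply: tidealM => //; apply: hx.
- by move=> H K x sKH hx J hJ hX; apply: tideal_res => //; apply: hx.
- by move=> K H x sKH hx J hJ hX; apply: tideal_tr => //; apply: hx.
- by move=> K H x sKH hx J hJ hX; apply: tideal_nm => //; apply: hx.
- by move=> g H K x eK hx J hJ hX; apply: tideal_conj => //; apply: hx.
Qed.

Lemma tgen_sub (X : tfam T) : subI X (tgen X).
Proof. by move=> H x hx J _ hX; apply: hX. Qed.

Lemma tgen_min (X J : tfam T) : is_tideal J -> subI X J -> subI (tgen X) J.
Proof. by move=> hJ hX H x hx; apply: hx. Qed.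

Lemma tfull_ideal : is_tideal (fun (H : {group gT}) (_ : tcar gT T H) => True).
Proof. by split. Qed.

Lemma tprod_ideal (I J : tfam T) : is_tideal (tprod I J).
Proof. exact: tgen_ideal. Qed.

Lemma tpow_ideal (I : tfam T) n : is_tideal (tpow I n).
Proof. by case: n => [|n] /=; [apply: tfull_ideal|apply: tprod_ideal]. Qed.

Lemma tprinc_in H (x : tcar gT T H) : @tprincipal _ _ H x H x.
Proof. by apply: tgen_sub. Qed.

Lemma tprinc_min H (x : tcar gT T H) (J : tfam T) : is_tideal J -> J H x -> subI (tprincipal x) J.
Proof. by move=> hJ hx; apply: tgen_min => // K y; apply. Qed.

Lemma tprod_min (I J Z : tfam T) : is_tideal Z ->
  (forall H x y, I H x -> J H y -> Z H (x * y)) -> subI (tprod I J) Z.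
Proof. by move=> hZ hp; apply: tgen_min => // H z [x [y [hx hy ->]]]; apply: hp. Qed.

Lemma tprod_gen (I J : tfam T) H x y : I H x -> J H y -> @tprod _ _ I J H (x * y).
Proof. by move=> hx hy; apply: tgen_sub; exists x, y. Qed.

Lemma ideal_one (I : tfam T) H x : is_tideal I -> I H 1 -> I H x.
Proof. by move=> hI h1; rewrite -[x]mulr1; apply: tidealM. Qed.

End OneT.
End Basic.

Section Groups.
Variable gT : finGroupType.
Implicit Types H K L : {group gT}.
Local Open Scope group_scope.

Lemma dcP L K (h x : gT) :
  reflect (exists l k, [/\ l \in L, k \in K & x = l * h * k]) (x \in (L :* h) * K).
Proof.
apply: (iffP mulsgP) => [[y k /rcosetP[l lL ->] kK ->]|[l [k [lL kK ->]]]].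
  by exists l, k.
by exists (l * h) k => //; apply/rcosetP; exists l.
Qed.

Lemma dc_eq L K (h y : gT) : y \in (L :* h) * K -> (L :* y) * K = (L :* h) * K.
Proof.
case/dcP=> l [k [lL kK ->]]; apply/setP=> x; apply/dcP/dcP.
  case=> l1 [k1 [l1L k1K ->]]; exists (l1 * l), (k * k1); split; rewrite ?groupM //.
  by rewrite !mulgA.
case=> l1 [k1 [l1L k1K ->]]; exists (l1 * l^-1), (k^-1 * k1); split; rewrite ?groupM ?groupV //.
by rewrite !mulgA mulgKV mulgK.
Qed.

Lemma dc_self L K (h : gT) : h \in (L :* h) * K.
Proof. by apply/dcP; exists 1, 1; rewrite !group1 mulg1 mul1g. Qed.

Definition dcreps L H K := [set repr ((L :* h) * K) | h in H].

Lemma dcreps_ok L H K : L \subset H -> K \subset H -> dcoset_reps L H K (dcreps L H K).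
Proof.
move=> sLH sKH; split.
  apply/subsetP=> _ /imsetP[h hH ->].
  have: repr ((L :* h) * K) \in (L :* h) * K by apply: mem_repr (dc_self L K h).
  case/dcP=> l [k [lL kK ->]].
  by rewrite !groupM // ?(subsetP sLH _ lL) ?(subsetP sKH _ kK).
move=> h hH; apply/eqP/cards1P; exists (repr ((L :* h) * K)); apply/setP=> x.
rewrite !inE; apply/andP/eqP=> [[/imsetP[h1 h1H ->] hx]|->].
  have e1: (L :* (repr ((L :* h1) * K))) * K = (L :* h1) * K.
    by apply: dc_eq; apply: mem_repr (dc_self L K h1).
  by rewrite -(dc_eq hx) e1.
by split; [apply/imsetP; exists h|apply: mem_repr (dc_self L K h)].
Qed.

Lemma dcoset_nonempty L H K R : dcoset_reps L H K R -> exists r, r \in R.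
Proof.
case=> _ /(_ 1 (group1 H)) /eqP/cards1P[r /setP /(_ r)].
by rewrite !inE eqxx => /andP[rR _]; exists r.
Qed.

Lemma orbit_exists (P : {set gT} -> bool) H : exists Phi, orbit_reps P H Phi.
Proof.
pose orb (S : {set gT}) := [set h *: S | h in H].
pose rep (S : {set gT}) := odflt S [pick S' in orb S | P S'].
have orbS S : S \in orb S by apply/imsetP; exists 1; rewrite ?group1 // lcoset1.
have orb_eq S S' : S' \in orb S -> orb S' = orb S.
  case/imsetP=> h hH ->; apply/setP=> X; apply/imsetP/imsetP=> [[u uH ->]|[u uH ->]].
    by exists (u * h); rewrite ?groupM // lcosetM.
  by exists (u * h^-1); rewrite ?groupM ?groupV // -lcosetM mulgKV.
have repP S : P S -> rep S \in orb S /\ P (rep S).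
  move=> PS; rewrite /rep; case: pickP => [S' /andP[] //|/(_ S)].
  by rewrite orbS PS.
exists [set rep S | S in [set S | P S]]; split.
  move=> X /imsetP[S]; rewrite inE => PS ->; by case: (repP S PS).
move=> S PS; apply/eqP/cards1P; exists (rep S); apply/setP=> X.
rewrite !inE; apply/andP/eqP=> [[/imsetP[S1] ]|->].
  rewrite inE => PS1 -> /existsP[h /andP[hH /eqP eX]].
  have [o1 _] := repP S1 PS1.
  have e1 := orb_eq _ _ o1.
  have e2 : orb (rep S1) = orb S by apply: orb_eq; apply/imsetP; exists h.
  have e3 : orb S1 = orb S by rewrite -e1 e2.
  rewrite /rep e3; case: pickP => // /(_ S).
  by rewrite orbS PS.
split; first by apply/imsetP; exists S; rewrite ?inE.
have [/imsetP[h hH eh] _] := repP S PS.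
by apply/existsP; exists h; rewrite hH eh eqxx.
Qed.

End Groups.

Section Groups2.
Variable gT : finGroupType.
Implicit Types H K L : {group gT}.
Local Open Scope group_scope.

Lemma stab_group_set (S : {set gT}) : group_set [set u : gT | u *: S == S].
Proof.
apply/group_setP; split; first by rewrite inE lcoset1.
by move=> x y; rewrite !inE => /eqP ex /eqP ey; rewrite lcosetM ey ex.
Qed.

Lemma lstab_stab H S u : u \in lstab H S -> u *: S = S.
Proof.
have sub: lstab H S \subset [set u : gT | u *: S == S].
  have := @gen_subG gT [set h in H | h *: S == S] (Group (stab_group_set S)).
  rewrite /lstab /= => ->; apply/subsetP=> x; rewrite !inE.
  by case/andP.
by move/(subsetP sub); rewrite inE => /eqP.
Qed.

Lemma lstab_sub H S : lstab H S \subset H.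
Proof. by rewrite /lstab /= gen_subG; apply/subsetP=> x; rewrite inE => /andP[]. Qed.

Lemma sec_sub H K L S h s : L \subset K -> section_set H K L S -> h \in H ->
  s \in S :&: h *: K -> (lstab H S :&: K :^ h^-1) \subset L :^ s^-1.
Proof.
move=> sLK /and3P[_ /eqP eSL /forallP cS] hH /setIP[sS shK].
have eq1 : S :&: h *: K = s *: L.
  apply/eqP; rewrite eq_sym eqEcard; apply/andP; split.
    apply/subsetP=> x; rewrite mem_lcoset => xL; rewrite inE; apply/andP; split.
      by rewrite -eSL -[x](mulKVg s); apply: mem_mulg.
    rewrite mem_lcoset -[x](mulKVg s) mulgA; apply: groupM => //.
      by rewrite -mem_lcoset.
    exact: (subsetP sLK).
  by have := cS h; rewrite hH /= => /eqP ->; rewrite card_lcoset.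
apply/subsetP=> u /setIP[/lstab_stab uS]; rewrite mem_conjg invgK => uK.
rewrite mem_conjg invgK.
have : u * s \in S :&: h *: K.
  rewrite inE; apply/andP; split.
    by rewrite -uS mem_lcoset mulKg.
  rewrite mem_lcoset; have -> : h^-1 * (u * s) = (u ^ h) * (h^-1 * s).
    by rewrite /conjg !mulgA mulgK.
  by apply: groupM => //; rewrite -mem_lcoset.
by rewrite eq1 mem_lcoset /conjg mulgA.
Qed.

End Groups2.


Section GP.
Variable gT : finGroupType.
Implicit Types H K L M N : {group gT}.
Variable T : tambara gT.
Local Notation res := (tres gT T).
Local Notation tr := (ttr gT T).
Local Notation nm := (tnm gT T).
Local Notation cj := (tconj gT T).

Lemma cjcomp g h H K L (x : tcar gT T H) : K = (H :^ g)%G -> L = (K :^ h)%G ->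
  cj h K L (cj g H K x) = cj (g * h)%g H L x.
Proof. exact: conj_comp. Qed.

Lemma conjG1 M : M = (M :^ 1)%G.
Proof. by apply: val_inj; rewrite /= conjsg1. Qed.

Lemma conjGM L g h : ((L :^ g) :^ h)%G = (L :^ (g * h))%G.
Proof. by apply: val_inj; rewrite /= conjsgM. Qed.

Lemma res_cj_res_cj L g M h M2 (w : tcar gT T L) :
  M \subset (L :^ g)%G -> M2 \subset (M :^ h)%G ->
  res (M :^ h)%G M2 (cj h M (M :^ h)%G (res (L :^ g)%G M (cj g L (L :^ g)%G w))) =
  res ((L :^ g) :^ h)%G M2 (cj (g * h)%g L ((L :^ g) :^ h)%G w).
Proof.
move=> sM sM2.
rewrite conj_res // res_comp //; last by rewrite conjSg.
by rewrite (@cjcomp _ _ _ (L :^ g)%G).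
Qed.

Local Unset Implicit Arguments.
Variables X Y Z : tfam T.
Hypothesis hZ : is_tideal Z.
Hypothesis Xres : forall H K x, K \subset H -> X H x -> X K (res H K x).
Hypothesis Xconj : forall g H K x, K = (H :^ g)%G -> X H x -> X K (cj g H K x).
Hypothesis Xnm : forall K H x, K \subset H -> X K x -> X H (nm K H x).
Hypothesis Yres : forall H K y, K \subset H -> Y H y -> Y K (res H K y).
Hypothesis XY : forall H x y, X H x -> Y H y -> Z H (x * y).

Definition Good N (u : tcar gT T N) := forall g K N', K = (N :^ g)%G -> N' \subset K ->
  forall y, Y N' y -> Z N' (res K N' (cj g N K u) * y).

Lemma Good0 N : Good N 0.
Proof.
move=> g K N' eK sN y _; rewrite conj0 // res0 // mul0r; exact: tideal0.
Qed.

Lemma GoodD N u v : Good N u -> Good N v -> Good N (u + v).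
Proof.
move=> hu hv g K N' eK sN y hy; rewrite conj_add // res_add // mulrDl.
by apply: tidealD => //; [apply: hu|apply: hv].
Qed.

Lemma GoodM N r u : Good N u -> Good N (r * u).
Proof.
move=> hu g K N' eK sN y hy; rewrite conj_mul // res_mul // -mulrA.
by apply: tidealM => //; apply: hu.
Qed.

Lemma GoodMr N r u : Good N u -> Good N (u * r).
Proof. by move=> *; rewrite mulrC; apply: GoodM. Qed.

Lemma Good_sum N (J : {set gT}) (F : gT -> tcar gT T N) :
  (forall j, j \in J -> Good N (F j)) -> Good N (\sum_(j in J) F j).
Proof.
move=> hF; elim/big_rec: _ => [|j s jJ hs]; first exact: Good0.
by apply: GoodD => //; apply: hF.
Qed.

Lemma Good_sumS N (J : {set {set gT}}) (F : {set gT} -> tcar gT T N) :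
  (forall j, j \in J -> Good N (F j)) -> Good N (\sum_(j in J) F j).
Proof.
move=> hF; elim/big_rec: _ => [|j s jJ hs]; first exact: Good0.
by apply: GoodD => //; apply: hF.
Qed.

Lemma Good_prod N (J : {set gT}) (F : gT -> tcar gT T N) j0 :
  j0 \in J -> Good N (F j0) -> Good N (\prod_(j in J) F j).
Proof. by move=> jJ hF; rewrite (bigD1 j0) //=; apply: GoodMr. Qed.

Lemma Good_tr M N u : M \subset N -> Good M u -> Good N (tr M N u).
Proof.
move=> sMN hu g K N' eK sN y hy; subst K.
rewrite conj_tr //.
have sMg : (M :^ g)%G \subset (N :^ g)%G by rewrite conjSg.
rewrite (mackey_tr _ _ _ _ _ _ _ sMg sN (dcreps_ok sN sMg)) mulr_suml.
apply: tideal_sum => // r _.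
rewrite -frobenius ?subsetIl //; apply: tideal_tr => //; first exact: subsetIl.
rewrite (@cjcomp _ _ _ (M :^ g)%G) //.
rewrite conjGM.
apply: hu; [by []| exact: subsetIr | ].
by apply: Yres => //; apply: subsetIl.
Qed.


Definition NG L (w : tcar gT T L) := forall g K M N, K = (L :^ g)%G -> M \subset K ->
  M \subset N -> Good N (nm M N (res K M (cj g L K w))).

Lemma NG0 L : NG L 0.
Proof.
move=> g K M N eK sM sMN; rewrite conj0 // res0 // nm_zero //; exact: Good0.
Qed.

Lemma NGM L r w : NG L w -> NG L (r * w).
Proof.
move=> hw g K M N eK sM sMN; rewrite conj_mul // res_mul // nm_mul //.
by apply: GoodM; apply: hw.
Qed.

Lemma NGres L L' w : L' \subset L -> NG L w -> NG L' (res L L' w).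
Proof.
move=> sL hw g K M N eK sM sMN; subst K.
rewrite conj_res // res_comp //; last by rewrite conjSg.
apply: hw => //; apply: subset_trans sM _; by rewrite conjSg.
Qed.

Lemma NGconj H K h w : K = (H :^ h)%G -> NG H w -> NG K (cj h H K w).
Proof.
move=> eK hw g K' M N eK' sM sMN.
rewrite (cjcomp _ eK eK'); apply: hw => //.
by rewrite eK' eK conjGM.
Qed.

Lemma NGnm L L2 w : L \subset L2 -> NG L w -> NG L2 (nm L L2 w).
Proof.
move=> sL hw g K M N eK sM sMN; subst K.
have sLg : (L :^ g)%G \subset (L2 :^ g)%G by rewrite conjSg.
rewrite conj_nm // (mackey_nm _ _ _ _ _ _ _ sLg sM (dcreps_ok sM sLg)).
rewrite (big_morph (nm M N) (fun x y => nm_mul _ _ _ _ x y sMN) (nm_one _ _ _ _ sMN)).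
have [r0 r0R] := dcoset_nonempty (dcreps_ok sM sLg).
apply: (Good_prod _ _ _ _ r0R).
rewrite nm_comp ?subsetIl //.
rewrite (@cjcomp _ _ _ (L :^ g)%G) //.
apply: hw; first by rewrite conjGM.
  exact: subsetIr.
exact: subset_trans (subsetIl _ _) sMN.
Qed.

Lemma NGD L w1 w2 : NG L w1 -> NG L w2 -> NG L (w1 + w2).
Proof.
move=> h1 h2 g K M N eK sM sMN; subst K.
rewrite conj_add // res_add //.
have [Phi hPhi] := orbit_exists (fun_to_2 N M) N.
have hR : forall S, S \in Phi -> dcoset_reps (lstab N S) N M (dcreps (lstab N S) N M).
  by move=> S _; apply: dcreps_ok => //; apply: lstab_sub.
rewrite (nm_add _ _ _ _ _ _ _ _ sMN hPhi hR).
apply: Good_sumS => S SPhi; apply: Good_tr; first exact: lstab_sub.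
have [h0 h0R] := dcoset_nonempty (hR S SPhi).
apply: (Good_prod _ _ _ _ h0R).
have sX : (lstab N S :&: M :^ h0^-1)%G \subset (M :^ h0^-1)%G by apply: subsetIr.
have key : forall w, NG L w -> Good (lstab N S) (nm (lstab N S :&: M :^ h0^-1)%G (lstab N S)
   (res (M :^ h0^-1)%G (lstab N S :&: M :^ h0^-1)%G
      (cj h0^-1 M (M :^ h0^-1)%G (res (L :^ g)%G M (cj g L (L :^ g)%G w))))).
  move=> w hw; rewrite res_cj_res_cj //.
  apply: hw; first by rewrite conjGM.
    by apply: subset_trans sX _; rewrite conjSg.
  exact: subsetIl.
by case: (h0 \in S); apply: key.
Qed.

Lemma NG_sum L (J : {set gT}) (F : gT -> tcar gT T L) :
  (forall j, j \in J -> NG L (F j)) -> NG L (\sum_(j in J) F j).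
Proof.
move=> hF; elim/big_rec: _ => [|j s jJ hs]; first exact: NG0.
by apply: NGD => //; apply: hF.
Qed.

Lemma NG_Good L w : NG L w -> Good L w.
Proof.
move=> hw; have := hw 1%g L L L (conjG1 L) (subxx _) (subxx _).
by rewrite nm_id res_id conj_in ?group1.
Qed.

Lemma NG_Good_nm M N u : M \subset N -> NG M u -> Good N (nm M N u).
Proof.
move=> sMN hu; have := hu 1%g M M N (conjG1 M) (subxx _) sMN.
by rewrite res_id conj_in ?group1.
Qed.

Lemma Direct (Y' X' N : {group gT}) (v : tcar gT T Y') : Y' \subset X' -> X' \subset N -> NG Y' v ->
  Good N (nm X' N (tr Y' X' v)).
Proof.
move=> sYX sXN hv.
have [Psi hPsi] := orbit_exists (section_set N X' Y') N.
have [hP1 _] := hPsi.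
have hR : forall S, S \in Psi -> dcoset_reps (lstab N S) N X' (dcreps (lstab N S) N X').
  by move=> S _; apply: dcreps_ok => //; apply: lstab_sub.
have hsel : forall S h, S \in Psi -> h \in dcreps (lstab N S) N X' ->
    repr (S :&: (h *: X')%g) \in S :&: (h *: X')%g.
  move=> S h SP hR'; have [sRN _] := hR S SP.
  have hN := subsetP sRN _ hR'.
  have /and3P[_ _ /forallP /(_ h)] := hP1 S SP.
  rewrite hN /= => /eqP cS.
  have : (0 < #|S :&: (h *: X')%g|)%N by rewrite cS cardG_gt0.
  by case/card_gt0P=> x xS; apply: mem_repr xS.
rewrite (nm_tr _ _ _ _ _ _ _ _ v sYX sXN hPsi hR hsel).
apply: Good_sumS => S SPsi; apply: Good_tr; first exact: lstab_sub.
have [h0 h0R] := dcoset_nonempty (hR S SPsi).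
apply: (Good_prod _ _ _ _ h0R).
apply: hv => //; last exact: subsetIl.
have [sRN _] := hR S SPsi.
apply: sec_sub => //; first exact: hP1.
  exact: subsetP sRN _ h0R.
exact: hsel.
Qed.

Lemma NG_tr_ind n : forall L2 L (w : tcar gT T L), (#|L2| <= n)%N -> L \subset L2 -> NG L w -> NG L2 (tr L L2 w).
Proof.
elim: n => [|n IH] L2 L w hc sL hw.
  by move: hc; rewrite leqn0 => /eqP hc; have := cardG_gt0 L2; rewrite hc.
move=> g K M N eK sM sMN; subst K.
rewrite conj_tr //.
have sLg : (L :^ g)%G \subset (L2 :^ g)%G by rewrite conjSg.
have [eqM|ltM] : M = (L2 :^ g)%G \/ (#|M| < #|L2|)%N.
  case: (eqVneq #|M| #|(L2 :^ g)%g|) => e.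
    left; apply: val_inj; apply/eqP; rewrite eqEcard sM /=; by rewrite e.
  right; rewrite -(cardJg L2 g) ltn_neqAle e /=; exact: subset_leq_card.
  subst M; rewrite res_id; apply: Direct => //.
  by apply: NGconj.
rewrite (mackey_tr _ _ _ _ _ _ _ sLg sM (dcreps_ok sM sLg)).
apply: NG_Good_nm => //; apply: NG_sum => r _.
apply: IH; first by rewrite -ltnS; apply: leq_trans ltM hc.
  exact: subsetIl.
apply: NGres; first exact: subsetIr.
by apply: NGconj => //; apply: NGconj.
Qed.

Lemma NG_ideal : is_tideal NG.
Proof.
split.
- by move=> H; split; [apply: NG0|apply: NGD|move=> r x; apply: NGM].
- by move=> H K x sKH hx; apply: NGres.
- by move=> K H x sKH hx; apply: (NG_tr_ind #|H| H K x (leqnn _)).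
- by move=> K H x sKH hx; apply: NGnm.
- by move=> g H K x eK hx; apply: NGconj.
Qed.

Lemma NG_base L u : X L u -> NG L u.
Proof.
move=> hu g K M N eK sM sMN g' K' N' eK' sN' y hy.
apply: XY => //; apply: Xres => //; apply: Xconj => //.
by apply: Xnm => //; apply: Xres => //; apply: Xconj.
Qed.

Lemma GP L w y : tgen X w -> Y L y -> Z L (w * y).
Proof.
move=> hw hy.
have : NG L w by apply: (tgen_min NG_ideal NG_base).
move/NG_Good => /(_ 1%g L L (conjG1 L) (subxx _) y hy).
by rewrite res_id conj_in ?group1.
Qed.

End GP.

Section Main.
Variable gT : finGroupType.
Implicit Types H K L M N : {group gT}.
Variables T S : tambara gT.
Variable phi : tmorph T S.
Local Notation f := (tmap phi).

Local Unset Implicit Arguments.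

Lemma preim_ideal (Z : tfam S) : is_tideal Z -> is_tideal (tpreim phi Z).
Proof.
move=> hZ; split.
- move=> H; split; rewrite /tpreim.
  + by rewrite rmorph0; apply: tideal0.
  + by move=> x y hx hy; rewrite rmorphD; apply: tidealD.
  + by move=> r x hx; rewrite rmorphM; apply: tidealM.
- by move=> H K x sKH hx; rewrite /tpreim tmap_res //; apply: tideal_res.
- by move=> K H x sKH hx; rewrite /tpreim tmap_tr //; apply: tideal_tr.
- by move=> K H x sKH hx; rewrite /tpreim tmap_nm //; apply: tideal_nm.
- by move=> g H K x eK hx; rewrite /tpreim tmap_conj //; apply: tideal_conj.
Qed.

Definition img (I : tfam T) : tfam S := fun H y => exists x, I H x /\ y = f H x.

Lemma push_ideal (I : tfam T) : is_tideal (tpush phi I).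
Proof. exact: tgen_ideal. Qed.

Lemma img_push (I : tfam T) H x : I H x -> @tpush _ _ _ phi I H (f H x).
Proof. by move=> hx; apply: tgen_sub; exists x. Qed.

Lemma push_sub (I : tfam T) (Z : tfam S) : is_tideal Z -> subI I (tpreim phi Z) ->
  subI (tpush phi I) Z.
Proof. by move=> hZ hI; apply: tgen_min => // H y [x [hx ->]]; apply: hI. Qed.

Section ImgClosure.
Variable I : tfam T.
Hypothesis hI : is_tideal I.
Lemma img_res H K x : K \subset H -> img I H x -> img I K (tres gT S H K x).
Proof. by move=> sKH [a [ha ->]]; exists (tres gT T H K a); rewrite tmap_res //; split => //; apply: tideal_res. Qed.
Lemma img_conj g H K x : K = (H :^ g)%G -> img I H x -> img I K (tconj gT S g H K x).
Proof. by move=> eK [a [ha ->]]; exists (tconj gT T g H K a); rewrite tmap_conj //; split => //; apply: tideal_conj. Qed.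
Lemma img_nm K H x : K \subset H -> img I K x -> img I H (tnm gT S K H x).
Proof. by move=> sKH [a [ha ->]]; exists (tnm gT T K H a); rewrite tmap_nm //; split => //; apply: tideal_nm. Qed.
End ImgClosure.

Lemma push_prod (A B : tfam T) : is_tideal A -> is_tideal B ->
  forall H w w', @tpush _ _ _ phi A H w -> @tpush _ _ _ phi B H w' -> @tpush _ _ _ phi (tprod A B) H (w * w').
Proof.
move=> hA hB.
have hW := push_ideal (tprod A B).
have st1 : forall H w y, @tpush _ _ _ phi A H w -> img B H y -> @tpush _ _ _ phi (tprod A B) H (w * y).
  move=> H w y hw hy.
  apply: (GP _ _ (img A) (img B) _ hW _ _ _ _ _ H w y hw hy).
  - by move=> *; apply: img_res.
  - by move=> *; apply: img_conj.
  - by move=> *; apply: img_nm.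
  - by move=> *; apply: img_res.
  - move=> H' _ _ [a [ha ->]] [b [hb ->]]; rewrite -rmorphM.
    by apply: img_push; apply: tprod_gen.
move=> H w w' hw hw'; rewrite mulrC.
apply: (GP _ _ (img B) (tpush phi A) _ hW _ _ _ _ _ H w' w hw' hw).
- by move=> *; apply: img_res.
- by move=> *; apply: img_conj.
- by move=> *; apply: img_nm.
- by move=> H' K' y' sK hy'; exact: (tideal_res (push_ideal A) sK hy').
- by move=> H' y x hy hx; rewrite mulrC; apply: st1.
Qed.

Lemma pow_push H (x : tcar gT T H) n : subI (tpow (tprincipal (f H x)) n) (tpush phi (tpow (tprincipal x) n)).
Proof.
elim: n => [|n IH] /=.
  move=> K z _; apply: (@ideal_one _ _ (tpush phi (fun H0 (_ : tcar gT T H0) => True)) K z (push_ideal _)).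
  by rewrite -(rmorph1 (f K)); apply: img_push.
apply: tprod_min; first exact: push_ideal.
move=> K a b ha hb; apply: push_prod.
- exact: tpow_ideal.
- exact: tgen_ideal.
- exact: IH.
- apply: (tprinc_min (push_ideal _)) hb.
  by apply: img_push; apply: tprinc_in.
Qed.

Lemma prime_rad (Q : tfam S) : is_prime_tideal Q ->
  forall H (y : tcar gT S H) n, subI (tpow (tprincipal y) n) Q -> Q H y.
Proof.
case=> hQ hprop hpr H y n hn.
suff : subI (tprincipal y) Q by apply; apply: tprinc_in.
elim: n hn => [|n IH] /= hn.
  by exfalso; apply: hprop; apply: hn.
case: (hpr _ _ (tpow_ideal _ n) (tgen_ideal _) hn) => //.
Qed.

Lemma elem_rad (T' : tambara gT) (Z : tfam T') H (y : tcar gT T' H) : is_tideal Z -> Z H y -> trad Z y.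
Proof.
move=> hZ hy; exists 1%N; split => //=.
apply: tprod_min => // K a b _ hb; apply: tidealM => //.
exact: (tprinc_min hZ hy).
Qed.

Variable Q : tfam S.
Hypothesis hQ : is_prime_tideal Q.

Lemma Q_ideal : is_tideal Q.
Proof. by case: hQ. Qed.

Lemma P_rad H (x : tcar gT T H) n : subI (tpow (tprincipal x) n) (tpreim phi Q) -> tpreim phi Q x.
Proof.
move=> hn; rewrite /tpreim; apply: (prime_rad _ hQ _ _ n).
move=> K z hz; apply: (push_sub _ _ Q_ideal hn); exact: pow_push.
Qed.

Lemma main_eq : phi_a phi Q = tpreim phi Q.
Proof.
apply: functional_extensionality_dep => H; apply: functional_extensionality => x.
apply: propositional_extensionality; split.
- case=> n [_ hn]; apply: (P_rad _ _ n) => K z hz.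
  have := hn K z hz; apply: tgen_min; first exact: preim_ideal _ Q_ideal.
  move=> L a [I [[[hI _] hIQ] hIa]].
  apply: hIQ; apply: elem_rad; first exact: push_ideal.
  exact: img_push.
- move=> hx; apply: elem_rad; first exact: tgen_ideal.
  apply: tgen_sub; exists (tpreim phi Q); split => //; split.
    split; first exact: preim_ideal _ Q_ideal.
    by move=> K z [n [_ hn]]; apply: (P_rad _ _ n).
  move=> K z [n [_ hn]]; apply: (prime_rad _ hQ _ _ n) => L u hu.
  apply: (push_sub _ _ Q_ideal (fun _ _ h => h)); exact: hn.
Qed.

End Main.

Unset Implicit Arguments.

Theorem proposition6p13 (gT : finGroupType) (T S : tambara gT)
  (phi : tmorph T S) (Q : tfam S) :
  is_prime_tideal Q -> phi_a phi Q = tpreim phi Q.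
Proof.
move=> hQ; exact: (main_eq _ _ _ phi Q hQ).
Qed.
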